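(* Fix $k\ge1$. Let $H$ be the free abelian group with basis $\{h_{i_1\dots i_{2k+3}}\mid\{i_1,\dots,i_{2k+3}\}=\{1,\dots,2k+3\}\}$, and let $P$ be the subgroup of $H$ generated by all elements \[h_{i_1\dots i_{2k+3}}-\operatorname{sgn}(\sigma)\,h_{i_{\sigma(1)}\dots i_{\sigma(2k+3)}}\qquad(\sigma\in S_{2k+3})\] and \[h_{i_1\dots i_{2k}\,i_{2k+1}\,i_{2k+2}\,i_{2k+3}}+h_{i_1\dots i_{2k}\,i_{2k+2}\,i_{2k+3}\,i_{2k+1}}+h_{i_1\dots i_{2k}\,i_{2k+3}\,i_{2k+1}\,i_{2k+2}},\] where $\{i_1,\dots,i_{2k+3}\}=\{1,\dots,2k+3\}$. Then $h_{12\dots(2k+3)}\notin P$. *)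

(* Defs.v *)
From HB Require Import structures.
From mathcomp Require Import all_boot all_order all_algebra all_fingroup.
Set Implicit Arguments. Unset Strict Implicit. Unset Printing Implicit Defensive.
Import GRing.Theory.
Local Open Scope ring_scope.

(* Index set {1,...,2k+3} is represented by 'I_(k.*2.+3) = {0,...,2k+2}.
   A sequence (i_1,...,i_{2k+3}) with {i_1,...,i_{2k+3}} = {1,...,2k+3}
   is a permutation s : 'S_(k.*2.+3), with s (j-1) = i_j. *)

(* The free abelian group H with basis h_s, s a permutation:
   finitely supported (here: all, since the basis is finite) functions
   'S_n -> int. *)
Notation H n := {ffun 'S_n -> int}.

Definition hb (n : nat) (s : 'S_n) : H n := [ffun t => ((t == s) : nat)%:Z].

Inductive gen_subgroup (G : Type) (V : zmodType) (gens : G -> V) : V -> Prop :=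
  | gs_gen : forall g, gen_subgroup gens (gens g)
  | gs_zero : gen_subgroup gens 0
  | gs_opp : forall v, gen_subgroup gens v -> gen_subgroup gens (- v)
  | gs_add : forall v w, gen_subgroup gens v -> gen_subgroup gens w ->
      gen_subgroup gens (v + w).

Definition sgnZ (n : nat) (s : 'S_n) : int := (-1) ^+ odd_perm s.

(* Reordering: the sequence (i_{sigma(1)},...,i_{sigma(n)}) is the permutation
   j |-> s (sigma j), which in mathcomp's (left-to-right) composition is sigma * s. *)

(* The 3-cycle rho on positions 2k, 2k+1, 2k+2 (0-indexed), i.e. on the last
   three positions: rho(2k) = 2k+1, rho(2k+1) = 2k+2, rho(2k+2) = 2k.
   (p * q) x = q (p x), so tperm x y * tperm x z maps x->y, y->z, z->x. *)
Definition rho3 (k : nat) : 'S_(k.*2.+3) :=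
  (tperm (inord k.*2) (inord k.*2.+1) * tperm (inord k.*2) (inord k.*2.+2))%g.

Inductive Pgen (k : nat) : Type :=
  | PG_sign : 'S_(k.*2.+3) -> 'S_(k.*2.+3) -> Pgen k
  | PG_cyc : 'S_(k.*2.+3) -> Pgen k.

Definition Pgen_val (k : nat) (g : Pgen k) : H (k.*2.+3) :=
  match g with
  | PG_sign s sigma => hb s - hb (sigma * s)%g *~ sgnZ sigma
  | PG_cyc s => hb s + hb (rho3 k * s)%g + hb (rho3 k * rho3 k * s)%g
  end.

Definition P (k : nat) (v : H (k.*2.+3)) : Prop := gen_subgroup (@Pgen_val k) v.

(* Main.v *)
Require Import Defs.
From HB Require Import structures.
From mathcomp Require Import all_boot all_order all_algebra all_fingroup.
From mathcomp Require Import zify.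

Import GRing.Theory.
Local Open Scope ring_scope.

Lemma ffD n (v w : H n) s : (v + w) s = v s + w s. Proof. exact: ffunE. Qed.
Lemma ffN n (v : H n) s : (- v) s = - v s. Proof. exact: ffunE. Qed.
Lemma ff0 n s : (0 : H n) s = 0. Proof. exact: ffunE. Qed.
Lemma ffhb n (t s : 'S_n) : hb t s = ((s == t) : nat)%:Z. Proof. exact: ffunE. Qed.

Definition Fs {n : nat} (v : H n) : int := \sum_(s : 'S_n) sgnZ s * v s.

Lemma Fs_add n (v w : H n) : Fs (v + w) = Fs v + Fs w.
Proof. by rewrite /Fs -big_split /=; apply: eq_bigr => s _; rewrite ffD mulrDr. Qed.

Lemma Fs_opp n (v : H n) : Fs (- v) = - Fs v.
Proof. by rewrite /Fs -sumrN; apply: eq_bigr => s _; rewrite ffN mulrN. Qed.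

Lemma Fs_zero n : Fs (0 : H n) = 0.
Proof. by rewrite /Fs big1 // => s _; rewrite ff0 mulr0. Qed.

Lemma Fs_mulz n (v : H n) z : Fs (v *~ z) = Fs v * z.
Proof.
rewrite /Fs big_distrl /=; apply: eq_bigr => s _.
by rewrite ffunMzE -mulrzr intz mulrA.
Qed.

Lemma Fs_hb n (t : 'S_n) : Fs (hb t) = sgnZ t.
Proof.
rewrite /Fs (bigD1 t) //= big1 ?addr0.
  by rewrite ffhb eqxx mulr1.
by move=> s /negbTE st; rewrite ffhb st mulr0.
Qed.

Lemma sgnZM n (p q : 'S_n) : sgnZ (p * q)%g = sgnZ p * sgnZ q.
Proof. by rewrite /sgnZ odd_permM signr_addb. Qed.

Lemma sgnZ2 n (p : 'S_n) : sgnZ p * sgnZ p = 1.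
Proof. by rewrite /sgnZ -signr_addb addbb. Qed.

Lemma rho3_even k : sgnZ (rho3 k) = 1.
Proof.
rewrite /rho3 sgnZM /sgnZ !odd_tperm.
have ne : forall a b, (a < k.*2.+3)%N -> (b < k.*2.+3)%N -> a != b ->
    (inord a : 'I_(k.*2.+3)) != inord b.
  move=> a b ha hb; apply: contra => /eqP/(congr1 val).
  by rewrite /= !inordK // => ->.
rewrite !ne; try lia.
by rewrite expr1 mulrN1 opprK.
Qed.

Lemma P_div (k : nat) (v : H k.*2.+3) : P v -> (3 %| Fs v)%Z.
Proof.
elim=> [g||w _ IH|w1 w2 _ IH1 _ IH2].
- case: g => [s sigma|s] /=.
  + rewrite Fs_add Fs_opp Fs_mulz !Fs_hb sgnZM -mulrA (mulrC (sgnZ s)) mulrA.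
    by rewrite sgnZ2 mul1r subrr dvdz0.
  + rewrite !Fs_add !Fs_hb (@sgnZM _ (rho3 k * rho3 k)) (@sgnZM _ (rho3 k)) (@sgnZM _ (rho3 k) (rho3 k)) rho3_even !mul1r.
    have -> : sgnZ s + sgnZ s + sgnZ s = 3 * sgnZ s by rewrite !mulrDl !mul1r addrA.
    exact: dvdz_mulr.
- by rewrite Fs_zero dvdz0.
- by rewrite Fs_opp rpredN.
- by rewrite Fs_add rpredD.
Qed.

Theorem lemma3p8 (k : nat) (hk : (1 <= k)%N) : ~ P (hb (1%g : 'S_(k.*2.+3))).
Proof.
move=> /P_div; rewrite Fs_hb /sgnZ odd_perm1 expr0.
by [].
Qed.
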